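(* Let $P$ be an Eulerian poset of rank $d>0$. Then (i) $B(P;u,1)=(1-u)^d$ and $B(P;1,v)=0$; (ii) the degree of $B(P;u,v)$ with respect to $v$ is less than $d/2$.
   Context: An Eulerian poset is a finite poset with least element $\hat0$, greatest element $\hat1$, all maximal chains of the same length $d$ (the rank), rank function $\rho$, and Möbius function $\mu(x,y)=(-1)^{\rho(y)-\rho(x)}$ for $x\le y$; intervals $[x,y]$ are Eulerian of rank $\rho(y)-\rho(x)$. For Eulerian $Q$ of rank $e$: $G(Q,t)=H(Q,t)=1$ if $e=0$; for $e>0$, $H(Q,t)=\sum_{\hat0<x\le\hat1}(t-1)^{\rho(x)-1}G([x,\hat1],t)$, $G(Q,t)=\tau_{<e/2}((1-t)H(Q,t))$ with $\tau_{<r}(\sum a_it^i)=\sum_{i<r}a_it^i$. $B(Q;u,v)\in\mathbb{Z}[u,v]$ is defined by $B=1$ if $e=0$ and for $e>0$ recursively by $\sum_{\hat0\le x\le\hat1}B([\hat0,x];u,v)u^{e-\rho(x)}G([x,\hat1],u^{-1}v)=G(Q,uv)$. *)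

(* Defs.v *)
From mathcomp Require Import all_boot all_order all_algebra.
Set Implicit Arguments. Unset Strict Implicit. Unset Printing Implicit Defensive.
Import GRing.Theory Num.Theory.
Local Open Scope ring_scope.

Section EulerianDefs.
Variables (T : finType) (le : rel T).

Definition ltP (x y : T) : bool := (x != y) && le x y.

Definition is_chain (C : {set T}) : bool :=
  [forall a in C, forall c in C, le a c || le c a].
Definition interval (x y : T) : {set T} := [set z | le x z && le z y].
Definition chain_in (x y : T) (C : {set T}) : bool :=
  (C \subset interval x y) && is_chain C.
(* maximal chains of [x,y] (maximal w.r.t. inclusion); length = #|C| - 1 *)
Definition maxchain (x y : T) (C : {set T}) : bool :=
  chain_in x y C &&
  [forall C' : {set T}, (chain_in x y C' && (C \subset C')) ==> (C' == C)].

(* rank of the interval [x,y]: the length of a longest chain of [x,y]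
   (= the common length of all maximal chains in a graded interval) *)
Definition rk (x y : T) : nat :=
  (\max_(C : {set T} | chain_in x y C) #|C|).-1.

(* Moebius function, by the usual recursion mu(x,x)=1,
   mu(x,y) = - sum_{x<=z<y} mu(x,z); fuel #|T| suffices. *)
Fixpoint mob_fuel (n : nat) (x y : T) : int :=
  if x == y then 1 else
  if le x y then
    match n with
    | 0 => 0
    | n'.+1 => - \sum_(z : T | le x z && ltP z y) mob_fuel n' x z
    end
  else 0.
Definition mobius (x y : T) : int := mob_fuel #|T| x y.

Definition eulerian (b t : T) : Prop :=
  [/\ reflexive le, antisymmetric le & transitive le] /\
  [/\ (forall x, le b x), (forall x, le x t),
      (forall C1 C2, maxchain b t C1 -> maxchain b t C2 -> #|C1| = #|C2|) &
      (forall x y, le x y -> mobius x y = (-1) ^+ (rk b y - rk b x))].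

Definition trunc_half (e : nat) (p : {poly int}) : {poly int} :=
  \poly_(i < size p) (if (i.*2 < e)%N then p`_i else 0).

Fixpoint GH_fuel (n : nat) (x y : T) : {poly int} * {poly int} :=
  match n with
  | 0 => (1, 1)
  | n'.+1 =>
    let e := rk x y in
    if e == 0%N then (1, 1) else
    let H := \sum_(z : T | ltP x z && le z y)
               ('X - 1) ^+ (rk x z).-1 * (GH_fuel n' z y).1 in
    (trunc_half e ((1 - 'X) * H), H)
  end.
Definition Gpoly (x y : T) : {poly int} := (GH_fuel #|T| x y).1.
Definition Hpoly (x y : T) : {poly int} := (GH_fuel #|T| x y).2.

(* Bivariate polynomials Z[u,v] are {poly {poly int}}:
   the outer variable is v, the coefficients are polynomials in u. *)
Definition uvar : {poly {poly int}} := ('X : {poly int})%:P.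
Definition vvar : {poly {poly int}} := 'X.

Definition subst_uv (g : {poly int}) : {poly {poly int}} :=
  \sum_(i < size g) (g`_i)%:P%:P * (uvar * vvar) ^+ i.
(* u^r g(u^{-1} v)  (a polynomial since deg g <= r for the G's used) *)
Definition hom_uv (r : nat) (g : {poly int}) : {poly {poly int}} :=
  \sum_(i < size g) (g`_i)%:P%:P * uvar ^+ (r - i) * vvar ^+ i.

Fixpoint B_fuel (n : nat) (x y : T) : {poly {poly int}} :=
  match n with
  | 0 => 1
  | n'.+1 =>
    let e := rk x y in
    if e == 0%N then 1 else
    subst_uv (Gpoly x y)
    - \sum_(z : T | le x z && ltP z y)
        B_fuel n' x z * hom_uv (e - rk x z) (Gpoly z y)
  end.
Definition Bpoly (x y : T) : {poly {poly int}} := B_fuel #|T| x y.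

End EulerianDefs.

(* Main.v *)
Require Import Defs.
From mathcomp Require Import all_boot all_order all_algebra.
From mathcomp Require Import zify.
Import GRing.Theory Num.Theory.
Set Implicit Arguments. Unset Strict Implicit. Unset Printing Implicit Defensive.
Local Open Scope ring_scope.

Definition revn (e : nat) (p : {poly int}) : {poly int} :=
  \sum_(i < e.+1) (p`_i)%:P * 'X^(e - i)%N.

Lemma revnD e p q : revn e (p + q) = revn e p + revn e q.
Proof.
by rewrite /revn -big_split /=; apply: eq_bigr => i _; rewrite coefD polyCD mulrDl.
Qed.

Lemma revn0 e : revn e 0 = 0.
Proof. by rewrite /revn big1 // => i _; rewrite coef0 mul0r. Qed.

Lemma revnN e p : revn e (- p) = - revn e p.
Proof.
by rewrite /revn -sumrN; apply: eq_bigr => i _; rewrite coefN polyCN mulNr.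
Qed.

Lemma revn_sum e (I : Type) (r : seq I) (P : pred I) (F : I -> {poly int}) :
  revn e (\sum_(i <- r | P i) F i) = \sum_(i <- r | P i) revn e (F i).
Proof. exact: (big_morph (revn e) (revnD e) (revn0 e)). Qed.

Lemma coef_revn e p k : (revn e p)`_k = if (k <= e)%N then p`_(e - k) else 0.
Proof.
rewrite /revn coef_sum.
under eq_bigr => i _ do rewrite coefCM coefXn.
case: ifP => hk.
  have hi : (e - k < e.+1)%N by lia.
  rewrite (bigD1 (Ordinal hi)) //= big1 ?addr0.
    by rewrite (_ : k == e - (e - k))%N ?mulr1 //; apply/eqP; lia.
  move=> i /eqP hne; rewrite (_ : (k == e - i)%N = false) ?mulr0 //.
  apply/eqP => h; apply: hne; apply: val_inj => /=; move: (ltn_ord i); lia.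
rewrite big1 // => i _; rewrite (_ : (k == e - i)%N = false) ?mulr0 //.
by apply/eqP; lia.
Qed.

Lemma revn_monom e c k : (k <= e)%N -> revn e (c%:P * 'X^k) = c%:P * 'X^(e - k)%N.
Proof.
move=> hk; apply/polyP => j; rewrite coef_revn !coefCM !coefXn.
case: ifP => hj.
  congr (_ * _); congr (_%:R); apply/eqP/eqP; lia.
by rewrite (_ : (j == e - k)%N = false) ?mulr0 //; apply/eqP; lia.
Qed.

Lemma poly_expand (p : {poly int}) n : (size p <= n)%N ->
  p = \sum_(i < n) (p`_i)%:P * 'X^i.
Proof.
move=> hn; apply/polyP => j; rewrite coef_sum.
under eq_bigr => i _ do rewrite coefCM coefXn.
case: (ltnP j n) => hj.
  rewrite (bigD1 (Ordinal hj)) //= big1 ?addr0 ?eqxx ?mulr1 //.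
  move=> i /eqP hne; rewrite (_ : (j == i)%N = false) ?mulr0 //.
  apply/eqP => h; apply: hne; apply: val_inj => /=; lia.
have -> : p`_j = 0.
 by apply: nth_default; exact: leq_trans hn hj.
by rewrite big1 // => i _; rewrite (_ : (j == i)%N = false) ?mulr0 //; apply/eqP; move: (ltn_ord i); lia.
Qed.

Lemma revM a b (p q : {poly int}) : (size p <= a.+1)%N -> (size q <= b.+1)%N ->
  revn (a + b) (p * q) = revn a p * revn b q.
Proof.
move=> hp hq.
have Ep := poly_expand hp; have Eq := poly_expand hq.
transitivity (revn (a + b) ((\sum_(i < a.+1) (p`_i)%:P * 'X^i) * (\sum_(j < b.+1) (q`_j)%:P * 'X^j))).
  by rewrite -Ep -Eq.
rewrite big_distrl revn_sum [in RHS]/revn [RHS]big_distrl /=.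
apply: eq_bigr => i _; rewrite big_distrr revn_sum [RHS]big_distrr /=.
apply: eq_bigr => j _.
rewrite mulrA -[_ * (q`_j)%:P]mulrA [_ * (q`_j)%:P]mulrC !mulrA -polyCM.
rewrite -mulrA -exprD revn_monom; last by move: (ltn_ord i) (ltn_ord j); lia.
have -> : (a + b - (i + j) = (a - i) + (b - j))%N by move: (ltn_ord i) (ltn_ord j); lia.
by rewrite polyCM exprD -!mulrA; congr (_ * _); rewrite mulrCA.
Qed.

Lemma coef_trunc e (p : {poly int}) k : (trunc_half e p)`_k = if (k.*2 < e)%N then p`_k else 0.
Proof.
rewrite /trunc_half coef_poly; case: ltnP => hk //.
by rewrite nth_default //; case: ifP.
Qed.

Lemma trunc_size e (p : {poly int}) : (0 < e)%N -> ((size (trunc_half e p)).-1.*2 < e)%N.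
Proof.
move=> he; set q := trunc_half e p.
have [->|nq] := eqVneq q 0; first by rewrite size_poly0.
have := nq; rewrite -lead_coef_eq0 lead_coefE /q coef_trunc.
by case: ifP => //; rewrite eqxx.
Qed.

Lemma revn0_1 : revn 0 1 = 1.
Proof. by rewrite /revn big_ord1 coefC /= mulr1. Qed.

Lemma size_Xsub1_exp a : size (('X - 1 : {poly int}) ^+ a) = a.+1.
Proof. by rewrite -polyC1 size_exp_XsubC. Qed.

Lemma revn_Xsub a : revn a (('X - 1) ^+ a) = (1 - 'X) ^+ a.
Proof.
elim: a => [|a IH]; first by rewrite !expr0 revn0_1.
rewrite exprSr -addn1 revM ?size_Xsub1_exp // ?IH; last by rewrite -polyC1 size_XsubC.
rewrite addn1 exprSr; congr (_ * _).
apply/polyP => k; rewrite coef_revn !coefB coefX coefC.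
by case: k => [|[|k]]; rewrite /= !(coefB, coefX, coefC, coef1) /= ?subr0 ?sub0r ?subrr.
Qed.

Lemma horner1_subst g : (subst_uv g).[1] = g.
Proof.
rewrite /subst_uv horner_sum.
transitivity (\sum_(i < size g) (g`_i)%:P * 'X^i); last by symmetry; apply: poly_expand.
apply: eq_bigr => i _.
by rewrite /uvar /vvar !hornerE.
Qed.

Lemma horner1_hom r (g : {poly int}) : (size g <= r.+1)%N -> (hom_uv r g).[1] = revn r g.
Proof.
move=> hg; rewrite /hom_uv horner_sum /revn.
rewrite (big_ord_widen r.+1 (fun i => ((g`_i)%:P%:P * uvar ^+ (r - i) * vvar ^+ i).[1])) //.
rewrite big_mkcond; apply: eq_bigr => i _; case: ifP => hi.
  by rewrite /uvar /vvar !hornerE expr1n mulr1.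
by rewrite nth_default ?polyC0 ?mul0r // leqNgt hi.
Qed.

Lemma coef_sumX (R : nzRingType) n (c : nat -> R) k :
  (\sum_(i < n) (c i)%:P * 'X^i)`_k = if (k < n)%N then c k else 0.
Proof.
rewrite coef_sum.
under eq_bigr => i _ do rewrite coefCM coefXn.
case: (ltnP k n) => hj.
  rewrite (bigD1 (Ordinal hj)) //= big1 ?addr0 ?eqxx ?mulr1 //.
  move=> i /eqP hne; rewrite (_ : (k == i)%N = false) ?mulr0 //.
  apply/eqP => h; apply: hne; apply: val_inj => /=; lia.
by rewrite big1 // => i _; rewrite (_ : (k == i)%N = false) ?mulr0 //; apply/eqP; move: (ltn_ord i); lia.
Qed.

Lemma uvarX i : uvar ^+ i = ('X^i)%:P.
Proof.
elim: i => [|i IH]; first by rewrite !expr0 polyC1.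
by rewrite exprS IH -polyCM -exprS.
Qed.

Lemma subst_uvE g : subst_uv g = \sum_(i < size g) ((g`_i)%:P * 'X^i)%:P * 'X^i.
Proof.
apply: eq_bigr => i _; rewrite exprMn mulrA uvarX -polyCM.
by rewrite /vvar.
Qed.

Lemma hom_uvE r g : hom_uv r g = \sum_(i < size g) ((g`_i)%:P * 'X^(r - i))%:P * 'X^i.
Proof.
apply: eq_bigr => i _; rewrite uvarX -polyCM.
by rewrite /vvar.
Qed.

Lemma map1_subst g : map_poly (fun p : {poly int} => p.[1]) (subst_uv g) = g.
Proof.
apply/polyP => k; rewrite coef_map_id0 ?horner0 // subst_uvE (@coef_sumX _ _ (fun i => (g`_i)%:P * 'X^i)).
case: ifP => hk; first by rewrite hornerE hornerXn expr1n mulr1.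
by rewrite horner0 nth_default // leqNgt hk.
Qed.

Lemma map1_hom r g : map_poly (fun p : {poly int} => p.[1]) (hom_uv r g) = g.
Proof.
apply/polyP => k; rewrite coef_map_id0 ?horner0 // hom_uvE (@coef_sumX _ _ (fun i => (g`_i)%:P * 'X^(r - i)%N)).
case: ifP => hk; first by rewrite hornerE hornerXn expr1n mulr1.
by rewrite horner0 nth_default // leqNgt hk.
Qed.

Notation ev1 := (fun p : {poly int} => p.[1]).

Lemma map1B (p q : {poly {poly int}}) : map_poly ev1 (p - q) = map_poly ev1 p - map_poly ev1 q.
Proof.
apply/polyP => k; rewrite coefB !coef_map_id0 ?horner0 // coefB.
by rewrite hornerD hornerN.
Qed.

Lemma map1_sum (I : Type) (r : seq I) (P : pred I) (F : I -> {poly {poly int}}) :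
  map_poly ev1 (\sum_(i <- r | P i) F i) = \sum_(i <- r | P i) map_poly ev1 (F i).
Proof.
apply/polyP => k; rewrite coef_map_id0 ?horner0 // !coef_sum horner_sum.
by apply: eq_bigr => i _; rewrite coef_map_id0 ?horner0.
Qed.

Lemma map1M (p q : {poly {poly int}}) : map_poly ev1 (p * q) = map_poly ev1 p * map_poly ev1 q.
Proof.
apply/polyP => k; rewrite coef_map_id0 ?horner0 // !coefM horner_sum.
by apply: eq_bigr => i _; rewrite hornerM !coef_map_id0 ?horner0.
Qed.

Lemma map1_1 : map_poly ev1 (1 : {poly {poly int}}) = 1.
Proof.
apply/polyP => k; rewrite coef_map_id0 ?horner0 // !coef1.
by case: (k == 0%N); rewrite ?hornerC.
Qed.

Lemma size_sumX (R : nzRingType) n (c : nat -> R) :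
  (size (\sum_(i < n) (c i)%:P * 'X^i)%R <= n)%N.
Proof.
apply/leq_sizeP => j hj; rewrite coef_sumX; case: ifP => //; lia.
Qed.

Lemma size_subst g : (size (subst_uv g) <= size g)%N.
Proof. by rewrite subst_uvE; apply: (@size_sumX _ _ (fun i => (g`_i)%:P * 'X^i)). Qed.

Lemma size_hom r g : (size (hom_uv r g) <= size g)%N.
Proof. by rewrite hom_uvE; apply: (@size_sumX _ _ (fun i => (g`_i)%:P * 'X^(r - i)%N)). Qed.

Lemma revn_trunc e (K : {poly int}) : (size K <= e.+1)%N -> revn e K = - K ->
  revn e (trunc_half e K) = trunc_half e K - K.
Proof.
move=> hs hr.
have HK j : (j <= e)%N -> K`_(e - j) = - K`_j.
  by move=> hj; move/polyP: hr => /(_ j); rewrite coef_revn hj coefN.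
have HK2 j : (e < j)%N -> K`_j = 0.
  by move=> hj; apply: nth_default; apply: leq_trans hs hj.
apply/polyP => k; rewrite coef_revn coefB !coef_trunc.
case: (leqP k e) => hk.
  case: (ltngtP k.*2 e) => h2.
  - by rewrite (_ : ((e - k).*2 < e)%N = false) ?subrr //; apply/negbTE; lia.
  - by rewrite (_ : ((e - k).*2 < e)%N = true) ?sub0r ?HK //; apply/idP; lia.
  - have ek : (e - k = k)%N by lia.
    have := HK k hk; rewrite ek => h.
    have h0 : K`_k = 0.
      by move: h; lia.
    by rewrite h0 subrr; case: ifP.
by rewrite HK2 // (_ : (k.*2 < e)%N = false) ?subrr //; apply/negbTE; lia.
Qed.

Lemma polyC_sign k : ((-1) ^+ k : int)%:P = (-1) ^+ k.
Proof.
elim: k => [|k IH]; first by rewrite !expr0 polyC1.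
by rewrite !exprS polyCM IH polyCN polyC1.
Qed.

Lemma polyC_sum (I : Type) (r : seq I) (P : pred I) (F : I -> int) :
  (\sum_(i <- r | P i) F i)%:P = \sum_(i <- r | P i) (F i)%:P.
Proof. exact: (big_morph _ (@polyCD int) (@polyC0 int)). Qed.


Local Close Scope ring_scope.
Section Poset.
Variables (T : finType) (le : rel T).
Hypotheses (lerr : reflexive le) (leanti : antisymmetric le) (letr : transitive le).

Lemma is_chainP (C : {set T}) :
  reflect (forall a c, a \in C -> c \in C -> le a c || le c a) (is_chain le C).
Proof.
apply: (iffP forallP) => [H a c aC cC | H a].
  by move: (H a); rewrite aC /= => /forallP /(_ c); rewrite cC.
by apply/implyP => aC; apply/forallP => c; apply/implyP => cC; apply: H.
Qed.

Lemma in_interval x y z : (z \in Defs.interval le x y) = le x z && le z y.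
Proof. by rewrite inE. Qed.

Lemma chain_inP x y (C : {set T}) :
  reflect ((forall z, z \in C -> le x z && le z y) /\
           (forall a c, a \in C -> c \in C -> le a c || le c a))
          (chain_in le x y C).
Proof.
apply: (iffP andP) => [[/subsetP H /is_chainP H2] | [H H2]]; split.
- by move=> z /H; rewrite in_interval.
- exact: H2.
- by apply/subsetP => z /H; rewrite in_interval.
- exact/is_chainP.
Qed.

Definition Mx x y := \max_(C : {set T} | chain_in le x y C) #|C|.

Lemma rkE x y : rk le x y = (Mx x y).-1.
Proof. by []. Qed.

Lemma chain_le_M x y (C : {set T}) : chain_in le x y C -> #|C| <= Mx x y.
Proof. by move=> H; rewrite /Mx; apply: (@leq_bigmax_cond _ (fun C => chain_in le x y C) (fun C : {set T} => #|C|)). Qed.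

Lemma longest x y : exists2 C, chain_in le x y C & #|C| = Mx x y.
Proof.
have : 0 < #|[pred C : {set T} | chain_in le x y C]|.
  apply/card_gt0P; exists set0; rewrite inE; apply/chain_inP; split.
    by move=> z; rewrite inE.
  by move=> a c; rewrite inE.
move/(eq_bigmax_cond (fun C : {set T} => #|C|)) => [C HC HM].
exists C; first by move: HC; rewrite inE.
by rewrite /Mx HM.
Qed.

Lemma M_gt0 x y : le x y -> 0 < Mx x y.
Proof.
move=> lxy; apply: leq_trans (chain_le_M (C := [set x]) _).
  by rewrite cards1.
apply/chain_inP; split.
  by move=> z; rewrite !inE => /eqP ->; rewrite lerr.
by move=> a c; rewrite !inE => /eqP -> /eqP ->; rewrite lerr.
Qed.

Lemma chain_add x y (C : {set T}) z : chain_in le x y C -> le x z -> le z y ->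
  (forall c, c \in C -> le c z || le z c) -> chain_in le x y (z |: C).
Proof.
move=> /chain_inP [H1 H2] xz zy Hz; apply/chain_inP; split.
  by move=> w; rewrite !inE => /orP [/eqP -> | /H1]; rewrite ?xz ?zy.
move=> a c; rewrite !inE => /orP [/eqP -> | aC] /orP [/eqP -> | cC].
- by rewrite lerr.
- by rewrite orbC Hz.
- by rewrite Hz.
- exact: H2.
Qed.

Lemma absorb x y (C D : {set T}) z : chain_in le x y C -> #|C| = Mx x y ->
  C \subset D -> is_chain le D -> z \in D -> le x z -> le z y -> z \in C.
Proof.
move=> HC HM /subsetP CD /is_chainP HD zD xz zy.
apply/negPn/negP => zC.
have H : chain_in le x y (z |: C).
  by apply: chain_add => // c /CD cD; apply: HD.
by move: (chain_le_M H); rewrite cardsU1 zC HM add1n ltnn.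
Qed.

Lemma longest_ends x y (C : {set T}) : le x y -> chain_in le x y C -> #|C| = Mx x y ->
  x \in C /\ y \in C.
Proof.
move=> lxy HC HM.
have HD : is_chain le (x |: (y |: C)).
  apply/is_chainP => a c.
  have Hw : forall w, w \in x |: (y |: C) -> le x w && le w y.
    move=> w; rewrite !inE => /orP [/eqP -> | /orP [/eqP -> | ]].
    - by rewrite lerr lxy.
    - by rewrite lerr lxy.
    - by move: HC => /chain_inP [H1 _] /H1.
  move=> aD cD; move: (aD) (cD); rewrite !inE.
  case/orP => [/eqP -> | /orP [/eqP -> | aC]].
  - by move: (Hw c cD) => /andP [-> _].
  - by move: (Hw c cD) => /andP [_ ->]; rewrite orbT.
  case/orP => [/eqP -> | /orP [/eqP -> | cC]].
  - by move: (Hw a aD) => /andP [-> _]; rewrite orbT.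
  - by move: (Hw a aD) => /andP [_ ->].
  by move: HC => /chain_inP [_ H2]; apply: H2.
split.
  apply: (absorb HC HM (D := x |: (y |: C))) => //; rewrite ?lerr //.
  - by apply/subsetP => w wC; rewrite !inE wC !orbT.
  - by rewrite !inE eqxx.
apply: (absorb HC HM (D := x |: (y |: C))) => //; rewrite ?lerr //.
- by apply/subsetP => w wC; rewrite !inE wC !orbT.
- by rewrite !inE eqxx orbT.
Qed.

Lemma rk_super x z y : le x z -> le z y -> rk le x z + rk le z y <= rk le x y.
Proof.
move=> xz zy; rewrite !rkE.
have [A HA MA] := longest x z; have [B HB MB] := longest z y.
have HU : chain_in le x y (A :|: B).
  move: HA HB => /chain_inP [A1 A2] /chain_inP [B1 B2].
  apply/chain_inP; split.
    move=> w; rewrite !inE => /orP [/A1 /andP [-> wz] | /B1 /andP [zw ->]].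
      by rewrite (letr wz zy).
    by rewrite (letr xz zw).
  move=> a c; rewrite !inE => /orP [aA | aB] /orP [cA | cB].
  - exact: A2.
  - by move: (A1 a aA) (B1 c cB) => /andP [_ az] /andP [zc _]; rewrite (letr az zc).
  - by move: (A1 c cA) (B1 a aB) => /andP [_ cz] /andP [za _]; rewrite (letr cz za) orbT.
  - exact: B2.
have HI : #|A :&: B| <= 1.
  rewrite -(cards1 z); apply: subset_leq_card; apply/subsetP => w.
  move: HA HB => /chain_inP [A1 _] /chain_inP [B1 _].
  rewrite !inE => /andP [/A1 /andP [_ wz] /B1 /andP [zw _]].
  by apply/eqP; apply: leanti; rewrite wz zw.
move: (chain_le_M HU); rewrite cardsU MA MB.
move: (M_gt0 xz) (M_gt0 zy) => h1 h2; lia.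
Qed.

Lemma rk_gt0 x y : le x y -> x != y -> 0 < rk le x y.
Proof.
move=> xy nxy; rewrite rkE.
have H : chain_in le x y [set x; y].
  apply/chain_inP; split.
    by move=> w; rewrite !inE => /orP [/eqP -> | /eqP ->]; rewrite ?lerr ?xy.
  by move=> a c; rewrite !inE => /orP [/eqP -> | /eqP ->] /orP [/eqP -> | /eqP ->];
     rewrite ?lerr ?xy ?orbT.
move: (chain_le_M H); rewrite cards2 nxy; lia.
Qed.

Lemma rk0_eq x y : le x y -> rk le x y = 0 -> x = y.
Proof.
move=> xy h; apply/eqP; apply/negPn/negP => nxy.
by move: (rk_gt0 xy nxy); rewrite h.
Qed.

Lemma rk_refl x : rk le x x = 0.
Proof.
rewrite rkE; apply/eqP; rewrite -subn1 subn_eq0; apply/bigmax_leqP => C /chain_inP [H _].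
rewrite -(cards1 x); apply: subset_leq_card; apply/subsetP => w /H.
by rewrite !inE => h; apply/eqP/leanti; rewrite andbC.
Qed.

Lemma rk_lt_card x y : rk le x y < #|T|.
Proof.
rewrite rkE; have h : Mx x y <= #|T|.
  by apply/bigmax_leqP => C _; apply: max_card.
have : 0 < #|T| by apply/card_gt0P; exists x.
lia.
Qed.

Lemma rk_lt x z y : le x z -> le z y -> z != y -> rk le x z < rk le x y.
Proof.
move=> xz zy nzy; move: (rk_super xz zy) (rk_gt0 zy nzy); lia.
Qed.

Lemma rk_lt' x z y : le x z -> le z y -> x != z -> rk le z y < rk le x y.
Proof.
move=> xz zy nxz; move: (rk_super xz zy) (rk_gt0 xz nxz); lia.
Qed.

Variables (b t : T).
Hypotheses (lb : forall x, le b x) (lt : forall x, le x t)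
  (hmax : forall C1 C2, maxchain le b t C1 -> maxchain le b t C2 -> #|C1| = #|C2|)
  (hmob : forall x y, le x y -> mobius le x y = ((-1) ^+ (rk le b y - rk le b x))%R).

Lemma maxchain_card (U : {set T}) : maxchain le b t U -> #|U| = Mx b t.
Proof.
move=> HU; have [L HL ML] := longest b t.
rewrite -ML; apply: hmax => //; apply/andP; split => //.
apply/forallP => C'; apply/implyP => /andP [HC' LC'].
rewrite eq_sym eqEcard LC' /= ML; exact: chain_le_M.
Qed.

Lemma graded x y : le x y -> rk le b y = rk le b x + rk le x y.
Proof.
move=> xy.
have [A HA MA] := longest b x; have [B HB MB] := longest x y.
have [C HC MC] := longest y t.
have [_ xA] := longest_ends (lb x) HA MA.
have [xB yB] := longest_ends xy HB MB.
have [yC _] := longest_ends (lt y) HC MC.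
move: (HA) (HB) (HC) => /chain_inP [A1 A2] /chain_inP [B1 B2] /chain_inP [C1 C2].
have HU : chain_in le b t (A :|: B :|: C).
  apply/chain_inP; split.
    by move=> w _; rewrite lb lt.
  have Hpos : forall w, w \in A :|: B :|: C ->
     [\/ w \in A /\ le w x, w \in B /\ le x w /\ le w y | w \in C /\ le y w].
    move=> w; rewrite !inE => /orP [/orP [wA | wB] | wC].
    - by apply: Or31; move: (A1 w wA) => /andP [_ ->].
    - by apply: Or32; move: (B1 w wB) => /andP [-> ->].
    - by apply: Or33; move: (C1 w wC) => /andP [-> _].
  move=> a c /Hpos Ha /Hpos Hc.
  case: Ha => [[aA ax] | [aB [xa ay]] | [aC ya]];
  case: Hc => [[cA cx] | [cB [xc cy]] | [cC yc]].
  - exact: A2.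
  - by rewrite (letr ax xc).
  - by rewrite (letr ax (letr xy yc)).
  - by rewrite (letr cx xa) orbT.
  - exact: B2.
  - by rewrite (letr ay yc).
  - by rewrite (letr cx (letr xy ya)) orbT.
  - by rewrite (letr cy ya) orbT.
  - exact: C2.
have HM : maxchain le b t (A :|: B :|: C).
  apply/andP; split => //; apply/forallP => C'; apply/implyP => /andP [HC' UC'].
  have sub : forall S : {set T}, S \subset A :|: B :|: C -> S \subset C'.
    by move=> S SU; exact: (subset_trans SU UC').
  have AC' : A \subset C' by apply: sub; rewrite -setUA subsetUl.
  have BC' : B \subset C' by apply: sub; rewrite -setUA setUC -setUA subsetUl.
  have CC' : C \subset C' by apply: sub; rewrite subsetUr.
  move: (HC') => /andP [_ chC'].
  rewrite eqEsubset UC' andbT; apply/subsetP => z zC'.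
  have xC' : x \in C' := subsetP AC' x xA.
  have yC' : y \in C' := subsetP CC' y yC.
  move/is_chainP: (chC') => Hch; move: (Hch z x zC' xC') (Hch z y zC' yC') => hx hy.
  case/orP: hx => [zx | xz].
    by rewrite !inE (absorb HA MA AC' chC' zC' (lb z) zx).
  case/orP: hy => [zy | yz].
    by rewrite !inE (absorb HB MB BC' chC' zC' xz zy) orbT.
  by rewrite !inE (absorb HC MC CC' chC' zC' yz (lt z)) orbT.
have cU := maxchain_card HM.
have h1 : 0 < #|A :&: B| by apply/card_gt0P; exists x; rewrite inE xA xB.
have h2 : 0 < #|(A :|: B) :&: C| by apply/card_gt0P; exists y; rewrite !inE yB yC orbT.
move: cU; rewrite cardsU cardsU.
have s1 := rk_super (lb x) xy.
have s2 := rk_super (lb y) (lt y).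
move: (M_gt0 (lb x)) (M_gt0 xy) (M_gt0 (lt y)) (M_gt0 (lb t)) => g1 g2 g3 g4.
move: s1 s2; rewrite !rkE MA MB MC.
have i1 : #|A :&: B| <= #|A| by apply: subset_leq_card; apply: subsetIl.
have i2 : #|(A :|: B) :&: C| <= #|C| by apply: subset_leq_card; apply: subsetIr.
lia.
Qed.

Lemma rk_add x z y : le x z -> le z y -> rk le x y = rk le x z + rk le z y.
Proof.
move=> xz zy; move: (graded xz) (graded zy) (graded (letr xz zy)); lia.
Qed.


Local Open Scope ring_scope.
Lemma ltPE x y : Defs.ltP le x y = (x != y) && le x y.
Proof. by []. Qed.

Lemma mob_stable n m x y : (rk le x y < n)%N -> (rk le x y < m)%N ->
  mob_fuel le n x y = mob_fuel le m x y.
Proof.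
elim: n m x y => [|n IH] [|m] x y //= hn hm.
case: eqP => // _; case: ifP => // lxy; congr (- _).
apply: eq_bigr => z /andP [xz]; rewrite ltPE => /andP [nzy zy].
have := rk_lt xz zy nzy.
by move=> h; apply: IH; lia.
Qed.

Lemma mobiusE x y : le x y -> x != y ->
  mobius le x y = - \sum_(z | le x z && Defs.ltP le z y) mobius le x z.
Proof.
move=> lxy nxy; rewrite /mobius.
have := rk_lt_card x y.
case E: #|T| => [|n] // hlt; rewrite [LHS]/=.
rewrite (negbTE nxy) lxy; congr (- _).
apply: eq_bigr => z /andP [xz]; rewrite ltPE => /andP [nzy zy].
have := rk_lt xz zy nzy.
by move=> h; apply: mob_stable; lia.
Qed.

Lemma GH_stable n m x y : (rk le x y < n)%N -> (rk le x y < m)%N ->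
  GH_fuel le n x y = GH_fuel le m x y.
Proof.
elim: n m x y => [|n IH] [|m] x y //= hn hm.
case: eqP => // /eqP e0.
have -> : (\sum_(z | Defs.ltP le x z && le z y) ('X - 1) ^+ (rk le x z).-1 * (GH_fuel le n z y).1)
  = (\sum_(z | Defs.ltP le x z && le z y) ('X - 1) ^+ (rk le x z).-1 * (GH_fuel le m z y).1).
  apply: eq_bigr => z /andP []; rewrite ltPE => /andP [nxz xz] zy.
  have := rk_lt' xz zy nxz.
  by move=> h; rewrite (IH m) //; lia.
by [].
Qed.

Lemma Gpoly0 x y : rk le x y = 0%N -> Gpoly le x y = 1.
Proof.
by move=> h; rewrite /Gpoly; case: #|T| => [|n] //=; rewrite h.
Qed.

Lemma HpolyE x y : rk le x y <> 0%N ->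
  Hpoly le x y = \sum_(z | Defs.ltP le x z && le z y) ('X - 1) ^+ (rk le x z).-1 * Gpoly le z y.
Proof.
move=> h; rewrite /Hpoly /Gpoly.
have := rk_lt_card x y.
case E: #|T| => [|n] // hlt; rewrite [LHS]/=.
rewrite (introF eqP h) /=.
apply: eq_bigr => z /andP []; rewrite ltPE => /andP [nxz xz] zy.
have := rk_lt' xz zy nxz.
by move=> h2; rewrite (GH_stable (m := n.+1)) //; lia.
Qed.

Lemma GpolyE x y : rk le x y <> 0%N ->
  Gpoly le x y = trunc_half (rk le x y) ((1 - 'X) * Hpoly le x y).
Proof.
move=> h; rewrite (HpolyE h) /Gpoly.
have := rk_lt_card x y.
case E: #|T| => [|n] // hlt; rewrite [LHS]/=.
rewrite (introF eqP h) /=.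
congr (trunc_half _ (_ * _)).
apply: eq_bigr => z /andP []; rewrite ltPE => /andP [nxz xz] zy.
have := rk_lt' xz zy nxz.
by move=> h2; rewrite (GH_stable (m := n.+1)) //; lia.
Qed.

Lemma B_stable n m x y : (rk le x y < n)%N -> (rk le x y < m)%N ->
  B_fuel le n x y = B_fuel le m x y.
Proof.
elim: n m x y => [|n IH] [|m] x y //= hn hm.
case: eqP => // /eqP e0; congr (_ - _).
apply: eq_bigr => z /andP [xz]; rewrite ltPE => /andP [nzy zy].
have := rk_lt xz zy nzy.
by move=> h; rewrite (IH m) //; lia.
Qed.

Lemma Bpoly0 x y : rk le x y = 0%N -> Bpoly le x y = 1.
Proof.
by move=> h; rewrite /Bpoly; case: #|T| => [|n] //=; rewrite h.
Qed.

Lemma BpolyE x y : rk le x y <> 0%N ->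
  Bpoly le x y = subst_uv (Gpoly le x y)
    - \sum_(z | le x z && Defs.ltP le z y)
        Bpoly le x z * hom_uv (rk le x y - rk le x z) (Gpoly le z y).
Proof.
move=> h; rewrite {1}/Bpoly.
have := rk_lt_card x y.
case E: #|T| => [|n] // hlt; rewrite [LHS]/=.
rewrite (introF eqP h) /=; congr (_ - _).
apply: eq_bigr => z /andP [xz]; rewrite ltPE => /andP [nzy zy].
have := rk_lt xz zy nzy.
by move=> h2; rewrite /Bpoly E (B_stable (m := n.+1)) //; lia.
Qed.


Local Notation rk := (rk le).
Local Notation G := (Gpoly le).

Lemma rkadd x z y : le x z -> le z y -> rk x y = (rk x z + rk z y)%N.
Proof. exact: rk_add. Qed.

Lemma split_first (F : T -> {poly int}) x y : le x y ->
  \sum_(w | le x w && le w y) F w = F x + \sum_(w | Defs.ltP le x w && le w y) F w.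
Proof.
move=> xy; rewrite (bigD1 x) /= ?lerr ?xy //; congr (_ + _).
by apply: eq_bigl => w; rewrite ltPE [x == w]eq_sym; case: (w == x); case: (le x w); case: (le w y).
Qed.

Lemma split_last (R : zmodType) (F : T -> R) x y : le x y ->
  \sum_(w | le x w && le w y) F w = F y + \sum_(w | le x w && Defs.ltP le w y) F w.
Proof.
move=> xy; rewrite (bigD1 y) /= ?lerr ?xy //; congr (_ + _).
by apply: eq_bigl => w; rewrite ltPE; case: (w == y); case: (le x w); case: (le w y).
Qed.

Lemma mob_rk x z : le x z -> mobius le x z = (-1) ^+ (rk x z).
Proof.
move=> xz; rewrite hmob //; congr (_ ^+ _).
by rewrite (rkadd (lb x) xz) addKn.
Qed.

Lemma sum_only x (F : T -> {poly int}) :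
  \sum_(w | le x w && le w x) F w = F x.
Proof.
rewrite (split_first _ (lerr x)) big1 ?addr0 // => w.
rewrite ltPE => /andP [/andP [nxw xw] wx].
have e : x = w by apply: leanti; rewrite xw wx.
by move: nxw; rewrite e eqxx.
Qed.

Lemma EU x w : le x w ->
  \sum_(z | le x z && le z w) ((-1) ^+ (rk x z) : {poly int}) = (x == w)%:R.
Proof.
move=> xw; case: (eqVneq x w) => [<- | nxw].
  by rewrite sum_only rk_refl expr0.
transitivity ((\sum_(z | le x z && le z w) mobius le x z)%:P).
  rewrite polyC_sum; apply: eq_bigr => z /andP [xz _].
  by rewrite mob_rk // polyC_sign.
by rewrite (split_last _ xw) (mobiusE xw nxw) addrC subrr.
Qed.

Lemma GL x y (F : T -> {poly int}) : le x y ->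
  \sum_(w | le x w && le w y) (1 - 'X) ^+ (rk x w) *
     \sum_(v | le w v && le v y) ('X - 1) ^+ (rk w v) * F v = F x.
Proof.
move=> xy.
rewrite big_mkcond /=.
transitivity (\sum_w \sum_v (if (le x w && le w y) && (le w v && le v y) then
   (-1) ^+ (rk x w) * (('X - 1) ^+ (rk x v) * F v) else 0)).
  apply: eq_bigr => w _; case: ifP => hw; last by rewrite big1 // => v _; rewrite hw.
  rewrite big_distrr big_mkcond /=; apply: eq_bigr => v _.
  case: ifP => // /andP [wv vy]; move/andP: hw => [xw wy].
  by rewrite (rkadd xw wv) exprD -opprB (exprNn ('X - 1)) !mulrA.
rewrite exchange_big /=.
transitivity (\sum_v (if le x v && le v y then
   (x == v)%:R * (('X - 1) ^+ (rk x v) * F v) else 0)).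
  apply: eq_bigr => v _; case: ifP => hv.
    move/andP: (hv) => [xv vy].
    rewrite -(EU xv) big_distrl [RHS]big_mkcond /=; apply: eq_bigr => w _.
    case: (boolP (le x w)) => xw; case: (boolP (le w v)) => wv //=;
      rewrite ?vy ?(letr wv vy) ?andbT //=.
    by rewrite andbF.
  apply: big1 => w _; case: ifP => // /andP [/andP [xw _] /andP [wv vy]].
  by move: hv; rewrite (letr xw wv) vy.
rewrite -big_mkcond /= (split_first _ xy) eqxx rk_refl expr0 !mul1r.
rewrite big1 ?addr0 // => v; rewrite ltPE => /andP [/andP [nxv _] _].
by rewrite (negbTE nxv) mul0r.
Qed.


Lemma G_size x y : (size (G x y) <= (rk x y).+1)%N.
Proof.
case: (eqVneq (rk x y) 0%N) => h.
  by rewrite Gpoly0 // size_poly1 h.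
rewrite GpolyE; last exact/eqP.
have h' : (0 < rk x y)%N by rewrite lt0n.
have := trunc_size ((1 - 'X) * Hpoly le x y) h'.
lia.
Qed.

Lemma G_size2 x y : (0 < rk x y)%N -> ((size (G x y)).-1.*2 < rk x y)%N.
Proof.
move=> h; rewrite GpolyE; last by move=> e; move: h; rewrite e.
exact: trunc_size.
Qed.

Lemma R0 x : revn (rk x x) (G x x) = \sum_(v | le x v && le v x) ('X - 1) ^+ (rk x v) * G v x.
Proof. by rewrite sum_only rk_refl expr0 mul1r Gpoly0 ?rk_refl // revn0_1. Qed.

Lemma Rmain n : forall x y, le x y -> (rk x y <= n)%N ->
  revn (rk x y) (G x y) = \sum_(v | le x v && le v y) ('X - 1) ^+ (rk x v) * G v y.
Proof.
elim: n => [|n IH] x y xy hn; case: (eqVneq x y) => [<-|nxy]; try exact: R0.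
  by move: (rk_gt0 xy nxy); lia.
set e := rk x y.
have he : (0 < e)%N := rk_gt0 xy nxy.
have e0 : e <> 0%N by lia.
set S := \sum_(v | Defs.ltP le x v && le v y) ('X - 1) ^+ (rk x v) * G v y.
have hK : (1 - 'X) * Hpoly le x y = - S.
  rewrite HpolyE // -[1 - 'X]opprB mulNr; congr (- _).
  rewrite big_distrr; apply: eq_bigr => v; rewrite ltPE => /andP [/andP [nxv xv] vy].
  by rewrite /= mulrA -exprS prednK // rk_gt0.
have hsS : (size S <= e.+1)%N.
  apply: (big_ind (fun p : {poly int} => (size p <= e.+1)%N)).
  - by rewrite size_poly0.
  - by move=> p q hp hq; apply: leq_trans (size_polyD p q) _; rewrite geq_max hp hq.
  - move=> v; rewrite ltPE => /andP [/andP [nxv xv] vy].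
    apply: leq_trans (size_polyMleq _ _) _; rewrite size_Xsub1_exp.
    move: (G_size v y) (rkadd xv vy); rewrite -/e; lia.
have hrS : revn e S = - S.
  rewrite /S revn_sum.
  transitivity (\sum_(v | Defs.ltP le x v && le v y) (1 - 'X) ^+ (rk x v) *
       \sum_(u | le v u && le u y) ('X - 1) ^+ (rk v u) * G u y).
    apply: eq_bigr => v; rewrite ltPE => /andP [/andP [nxv xv] vy].
    rewrite /e (rkadd xv vy) revM ?size_Xsub1_exp ?G_size // revn_Xsub IH //.
    by have := rk_lt' xv vy nxv; lia.
  have h := @GL x y (fun u => G u y) xy.
  rewrite (split_first _ xy) rk_refl expr0 mul1r (split_first _ xy) rk_refl expr0 mul1r -/S in h.
  by apply: (addrI (G x y + S)); rewrite /= h addrK.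
have hsK : (size ((1 - 'X) * Hpoly le x y)%R <= e.+1)%N by rewrite hK size_opp.
have hrK : revn e ((1 - 'X) * Hpoly le x y) = - ((1 - 'X) * Hpoly le x y).
  by rewrite hK revnN hrS opprK.
rewrite GpolyE // -/e revn_trunc // -(GpolyE e0) hK opprK (split_first _ xy) rk_refl expr0 mul1r.
by [].
Qed.

Lemma Rm x y : le x y ->
  revn (rk x y) (G x y) = \sum_(v | le x v && le v y) ('X - 1) ^+ (rk x v) * G v y.
Proof. by move=> xy; apply: (@Rmain (rk x y)). Qed.

Lemma MI x y : le x y ->
  \sum_(z | le x z && le z y) (1 - 'X) ^+ (rk x z) * revn (rk z y) (G z y) = G x y.
Proof.
move=> xy; rewrite -[RHS](@GL x y (fun u => G u y) xy).
by apply: eq_bigr => z /andP [xz zy]; rewrite Rm.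
Qed.

Lemma Bu1 n : forall x y, le x y -> (rk x y <= n)%N ->
  (Bpoly le x y).[1] = (1 - 'X) ^+ (rk x y).
Proof.
elim: n => [|n IH] x y xy hn; case: (eqVneq x y) => [<-|nxy];
  try by rewrite Bpoly0 rk_refl // hornerE expr0.
  by move: (rk_gt0 xy nxy); lia.
have e0 : rk x y <> 0%N by move: (rk_gt0 xy nxy); lia.
rewrite BpolyE // hornerD hornerN horner1_subst horner_sum.
have hm := MI xy.
rewrite (split_last _ xy) rk_refl Gpoly0 ?rk_refl // revn0_1 mulr1 in hm.
rewrite -[X in X - _]hm.
have -> : \sum_(z | le x z && Defs.ltP le z y)
    (Bpoly le x z * hom_uv (rk x y - rk x z) (G z y)).[1] =
  \sum_(z | le x z && Defs.ltP le z y) (1 - 'X) ^+ (rk x z) * revn (rk z y) (G z y).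
  apply: eq_bigr => z /andP [xz]; rewrite ltPE => /andP [nzy zy].
  rewrite hornerM IH //; last by have := rk_lt xz zy nzy; lia.
  by rewrite (rkadd xz zy) addKn horner1_hom // G_size.
by rewrite addrK.
Qed.
Lemma Bv1 n : forall x y, le x y -> x != y -> (rk x y <= n)%N ->
  map_poly ev1 (Bpoly le x y) = 0.
Proof.
elim: n => [|n IH] x y xy nxy hn.
  by move: (rk_gt0 xy nxy); lia.
have e0 : rk x y <> 0%N by move: (rk_gt0 xy nxy); lia.
rewrite BpolyE // map1B (map1_subst (G x y)) map1_sum (bigD1 x) /=; last by rewrite lerr ltPE nxy xy.
rewrite map1M (Bpoly0 (rk_refl x)) map1_1 mul1r (map1_hom _ (G x y)) big1 ?addr0 ?subrr //.
move=> z /andP [/andP [xz]]; rewrite ltPE => /andP [nzy zy] nzx.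
rewrite map1M IH ?mul0r //; first by rewrite eq_sym.
by have := rk_lt xz zy nzy; lia.
Qed.

Lemma Bdeg n : forall x y, le x y -> x != y -> (rk x y <= n)%N ->
  ((size (Bpoly le x y)).-1.*2 < rk x y)%N.
Proof.
elim: n => [|n IH] x y xy nxy hn.
  by move: (rk_gt0 xy nxy); lia.
have he := rk_gt0 xy nxy.
have e0 : rk x y <> 0%N by lia.
rewrite BpolyE //.
pose P := fun p : {poly {poly int}} => ((size p).-1.*2 < rk x y)%N.
have PD : forall p q, P p -> P q -> P (p + q).
  move=> p q; rewrite /P => hp hq; move: (size_polyD p q); lia.
have PN : forall p, P p -> P (- p) by move=> p; rewrite /P size_opp.
have P0 : P 0 by rewrite /P size_poly0.
apply: (PD); first by move: (size_subst (G x y)) (G_size2 he); rewrite /P; lia.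
apply: (PN); apply: (big_ind P) => //.
move=> z /andP [xz]; rewrite ltPE => /andP [nzy zy].
have hzy := rk_gt0 zy nzy.
have hs := size_hom (rk x y - rk x z) (G z y).
have hG := G_size2 hzy.
have hm := size_polyMleq (Bpoly le x z) (hom_uv (rk x y - rk x z) (G z y)).
have ha := rkadd xz zy.
case: (eqVneq x z) => [exz | nxz].
  rewrite -exz Bpoly0 ?rk_refl // mul1r /P.
  move: hs (G_size2 he); rewrite -exz rk_refl; lia.
have hB := IH x z xz nxz (ltnSE (leq_trans (rk_lt xz zy nzy) hn)).
rewrite /P; move: hm hB hs hG ha; lia.
Qed.

Lemma main_sec : b != t ->
  [/\ (Bpoly le b t).[1] = (1 - 'X) ^+ rk b t,
      map_poly (fun p : {poly int} => p.[1]) (Bpoly le b t) = 0 &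
      ((size (Bpoly le b t)).-1.*2 < rk b t)%N].
Proof.
move=> nbt; split.
- exact: (@Bu1 (rk b t)).
- exact: (@Bv1 (rk b t)).
- exact: (@Bdeg (rk b t)).
Qed.

End Poset.

Unset Implicit Arguments.
Local Open Scope ring_scope.
Theorem proposition2p10 (T : finType) (le : rel T) (b t : T) (d : nat) :
  eulerian le b t -> rk le b t = d -> (0 < d)%N ->
  [/\ (Bpoly le b t).[1] = (1 - 'X) ^+ d,
      map_poly (fun p : {poly int} => p.[1]) (Bpoly le b t) = 0 &
      ((size (Bpoly le b t)).-1.*2 < d)%N].
Proof.
move=> [[h1 h2 h3] [h4 h5 h6 h7]] <- hd.
have nbt : b != t.
  by apply/eqP => e; move: hd; rewrite e (rk_refl h2).
exact: (main_sec h1 h2 h3 h4 h5 h6 h7 nbt).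
Qed.
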